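(* Let $T$ be a countable tree without leaves (vertices of infinite degree are allowed), let $P=(p(x,y))_{x,y\in T}$ be a stochastic nearest-neighbour transition matrix on $T$, and let $\lambda\in\mathbb C$. Suppose the oriented edges of $T$ carry $\lambda$-weights $f(x,y)\in\mathbb C$ ($x\sim y$) satisfying, for every vertex $x$ and every neighbour $y$ of $x$: (i) $f(x,y)f(y,x)\neq 1$; (ii) the series $u(x,x)=\sum_{v\sim x}p(x,v)f(v,x)$ converges absolutely and $u(x,x)\neq\lambda$; (iii) $\lambda f(x,y)=p(x,y)+\bigl(u(x,x)-p(x,y)f(y,x)\bigr)f(x,y)$. Extend $f$ to all pairs by $f(x,x)=1$ and $f(x,y)=f(x_0,x_1)f(x_1,x_2)\cdots f(x_{k-1},x_k)$ when the geodesic from $x$ to $y$ is $[x=x_0,x_1,\dots,x_k=y]$. Then for every fixed $y\in T$, the function $x\mapsto f(x,y)$ satisfies $$\sum_{w\sim x}p(x,w)f(w,y)=\lambda f(x,y)\quad\text{for } x\neq y,\qquad \sum_{w\sim y}p(y,w)f(w,y)=u(y,y),$$ where the sums converge absolutely.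
   Context: A nearest-neighbour stochastic transition matrix means $p(x,y)>0$ if and only if $x$ and $y$ are neighbours ($x\sim y$), and $\sum_y p(x,y)=1$ for all $x$. The tree may have vertices of infinite degree; a leaf is a vertex of degree $1$. *)

(* Defs.v *)
From Stdlib Require Import Reals List.
From Coquelicot Require Import Coquelicot.
Import ListNotations.
Set Implicit Arguments.

Section Graphs.
Variable T : Type.
Variable adj : T -> T -> bool.

Fixpoint walk (x : T) (s : list T) : Prop :=
  match s with
  | [] => True
  | y :: s' => adj x y = true /\ walk y s'
  end.

Definition walk_from_to (x : T) (s : list T) (y : T) : Prop :=
  walk x s /\ last s x = y.

Definition geodesic (x : T) (s : list T) (y : T) : Prop :=
  walk_from_to x s y /\
  forall s', walk_from_to x s' y -> (length s <= length s')%nat.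

Definition graph_symmetric : Prop := forall x y, adj x y = adj y x.
Definition graph_irreflexive : Prop := forall x, adj x x = false.
Definition graph_connected : Prop := forall x y, exists s, walk_from_to x s y.
Definition has_cycle : Prop :=
  exists x0 s, NoDup (x0 :: s) /\ (2 <= length s)%nat /\ walk x0 s /\
               adj (last s x0) x0 = true.
Definition is_tree : Prop :=
  graph_symmetric /\ graph_irreflexive /\ graph_connected /\ ~ has_cycle.
Definition is_leaf (x : T) : Prop :=
  exists y, adj x y = true /\ forall z, adj x z = true -> z = y.

(* countability: an enumeration hitting every vertex exactly once *)
Definition enumerates (e : nat -> option T) : Prop :=
  forall t, exists! n, e n = Some t.

Definition nn_stochastic (e : nat -> option T) (p : T -> T -> R) : Prop :=
  (forall x y, 0 <= p x y) /\
  (forall x y, 0 < p x y <-> adj x y = true) /\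
  (forall x, is_series (fun n => match e n with Some y => p x y | None => 0%R end) 1%R).

Definition nbr_term (e : nat -> option T) (p : T -> T -> R) (x : T) (g : T -> C)
  (n : nat) : C :=
  match e n with
  | Some v => if adj x v then Cmult (RtoC (p x v)) (g v) else RtoC 0
  | None => RtoC 0
  end.

Definition nbr_abs_sum (e : nat -> option T) (p : T -> T -> R) (x : T) (g : T -> C)
  (l : C) : Prop :=
  ex_series (fun n => Cmod (nbr_term e p x g n)) /\ is_series (nbr_term e p x g) l.

End Graphs.

Fixpoint walk_prod (T : Type) (f : T -> T -> C) (x : T) (s : list T) : C :=
  match s with
  | [] => RtoC 1
  | y :: s' => Cmult (f x y) (walk_prod f y s')
  end.

(* Main.v *)
Require Import Defs.
From Stdlib Require Import Reals List.
From Coquelicot Require Import Coquelicot.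
From Stdlib Require Import Lia Classical Arith Wf_nat.
Import ListNotations.

Lemma last_cons_gen (A : Type) : forall (l : list A) b d, last (b :: l) d = last l b.
Proof.
  induction l as [|c l IH]; intros b d; [reflexivity|].
  change (last (c :: l) d = last (c :: l) b). rewrite !IH. reflexivity.
Qed.

Lemma last_app_cons (A : Type) : forall (l1 l2 : list A) x d,
  last (l1 ++ x :: l2) d = last l2 x.
Proof.
  induction l1 as [|a l1 IH]; intros l2 x d; simpl app.
  - apply last_cons_gen.
  - rewrite last_cons_gen. apply IH.
Qed.

Lemma last_in_cons (A : Type) : forall (l : list A) a, In (last l a) (a :: l).
Proof.
  induction l as [|b l IH]; intros a; [left; reflexivity|].
  rewrite last_cons_gen. right. apply IH.
Qed.

Section G.
Variable T : Type.
Variable adj : T -> T -> bool.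

Lemma walk_app : forall l1 l2 a,
  walk adj a (l1 ++ l2) <-> walk adj a l1 /\ walk adj (last l1 a) l2.
Proof.
  induction l1 as [|b l1 IH]; intros l2 a; simpl app.
  - simpl. tauto.
  - change (walk adj a (b :: l1 ++ l2)) with (adj a b = true /\ walk adj b (l1 ++ l2)).
    change (walk adj a (b :: l1)) with (adj a b = true /\ walk adj b l1).
    rewrite IH, last_cons_gen. tauto.
Qed.

Lemma geo_tail a v s b : geodesic adj a (v :: s) b -> geodesic adj v s b.
Proof.
  intros [[[Hav Hw] Hl] Hmin]. rewrite last_cons_gen in Hl.
  split. split; auto.
  intros s' [Hw' Hl']. assert (H := Hmin (v :: s')). simpl in H.
  apply le_S_n, H. split. split; auto. rewrite last_cons_gen; auto.
Qed.

Lemma geo_nodup : forall s a b, geodesic adj a s b -> NoDup (a :: s).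
Proof.
  induction s as [|v s IH]; intros a b H.
  - constructor; [simpl; tauto| constructor].
  - constructor. 2: eapply IH, geo_tail; eauto.
    intro Hin. destruct (in_split _ _ Hin) as [l1 [l2 E]].
    destruct H as [[Hw Hl] Hmin].
    assert (Hm := Hmin l2). rewrite E in Hw, Hl, Hm.
    rewrite walk_app in Hw. destruct Hw as [_ Hw]. simpl in Hw.
    rewrite last_app_cons in Hl. rewrite length_app in Hm. simpl in Hm.
    assert (length (l1 ++ a :: l2) <= length l2)%nat.
    { rewrite length_app. simpl. apply Hm. split; tauto. }
    rewrite length_app in H. simpl in H. lia.
Qed.

Lemma geo_exists : forall n s a b, length s = n -> walk_from_to adj a s b ->
  exists g, geodesic adj a g b.
Proof.
  intros n. induction n as [n IH] using lt_wf_ind. intros s a b Hn Hs.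
  destruct (classic (forall s', walk_from_to adj a s' b -> (length s <= length s')%nat)) as [H|H].
  - exists s. split; auto.
  - apply not_all_ex_not in H. destruct H as [s' H]. apply imply_to_and in H.
    destruct H as [H1 H2]. exact (IH (length s') ltac:(lia) s' a b eq_refl H1).
Qed.

Lemma first_split (P : T -> Prop) : forall L, (exists z, In z L /\ P z) ->
  exists A z B, L = A ++ z :: B /\ P z /\ forall a, In a A -> ~ P a.
Proof.
  induction L as [|c L IH]; intros [z [Hz HP]]; [destruct Hz|].
  destruct (classic (P c)) as [Hc|Hc].
  - exists [], c, L. split; [reflexivity|]. split; [exact Hc|]. intros a Ha; destruct Ha.
  - destruct Hz as [-> | Hz]; [contradiction|].
    destruct (IH (ex_intro _ z (conj Hz HP))) as [A [z' [B [E [HPz Hn]]]]].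
    exists (c :: A), z', B. split. rewrite E; reflexivity. split; auto.
    intros a [<- | Ha]; auto.
Qed.

Lemma walk_rev (Hsym : graph_symmetric adj) : forall l a b,
  walk adj a (l ++ [b]) -> walk adj b (rev l ++ [a]).
Proof.
  induction l as [|c l IH]; intros a b H.
  - simpl in *. rewrite Hsym. tauto.
  - destruct H as [Hac H]. apply IH in H. simpl rev.
    apply walk_app. split; auto. rewrite last_last. simpl. rewrite Hsym. auto.
Qed.

Lemma sep (Hsym : graph_symmetric adj) (Hnc : ~ has_cycle adj) x x' g' w h :
  NoDup (x :: x' :: g') -> walk adj x (x' :: g') -> adj x w = true -> w <> x' ->
  NoDup (w :: h) -> walk adj w h -> last h w = last (x' :: g') x -> In x (w :: h).
Proof.
  intros Hnd Hwg Hxw Hwx' Hndh Hwh Hlast. apply NNPP; intro Hx.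
  set (g := x' :: g') in *.
  assert (Hex : exists z, In z (w :: h) /\ In z g).
  { exists (last h w). split. apply last_in_cons. rewrite Hlast.
    unfold g. rewrite last_cons_gen. apply last_in_cons. }
  destruct (first_split (fun z => In z g) (w :: h) Hex) as [A [z [B [E [Hzg HA]]]]].
  destruct (in_split _ _ Hzg) as [C [D Eg]].
  assert (HzL : In z (w :: h)) by (rewrite E; apply in_or_app; right; left; auto).
  assert (HxA : ~ In x g) by (inversion Hnd; auto).
  apply Hnc. exists x, (A ++ z :: rev C).
  assert (HW : walk adj x ((A ++ z :: rev C) ++ [x])).
  { replace ((A ++ z :: rev C) ++ [x]) with ((A ++ [z]) ++ (rev C ++ [x]))
      by (rewrite <- !app_assoc; reflexivity).
    apply walk_app; split.
    - assert (H1 : walk adj x (w :: h)) by (split; auto).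
      rewrite E in H1. replace (A ++ z :: B) with ((A ++ [z]) ++ B) in H1
        by (rewrite <- app_assoc; reflexivity).
      apply walk_app in H1. tauto.
    - rewrite last_last. apply walk_rev; auto.
      assert (H1 := Hwg). fold g in H1. rewrite Eg in H1.
      replace (C ++ z :: D) with ((C ++ [z]) ++ D) in H1
        by (rewrite <- app_assoc; reflexivity).
      apply walk_app in H1. tauto. }
  apply walk_app in HW. destruct HW as [HW1 HW2]. simpl in HW2.
  split; [|split; [|split]]; try tauto.
  - constructor.
    + intro Hin. apply in_app_or in Hin. destruct Hin as [Hin|[Hin|Hin]].
      * apply Hx. rewrite E. apply in_or_app; auto.
      * subst z. contradiction.
      * apply in_rev in Hin. apply HxA. rewrite Eg. apply in_or_app; auto.
    + assert (HndL : NoDup (A ++ z :: B)) by (rewrite <- E; auto).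
      assert (Hndg : NoDup (C ++ z :: D)) by (rewrite <- Eg; inversion Hnd; auto).
      apply NoDup_app.
      * eapply NoDup_app_remove_r; eauto.
      * constructor.
        -- intro Hin. apply in_rev in Hin. apply (NoDup_remove_2 _ _ _ Hndg).
           apply in_or_app; auto.
        -- apply NoDup_rev. eapply NoDup_app_remove_r; eauto.
      * intros a Ha [Hz|Hin].
        -- subst a. apply (HA z Ha Hzg).
        -- apply in_rev in Hin. apply (HA a Ha). rewrite Eg. apply in_or_app; auto.
  - rewrite length_app. simpl. rewrite length_rev.
    destruct A as [|a A].
    + simpl in E. injection E as Ewz _. subst z.
      destruct C as [|c C].
      * simpl in Eg. unfold g in Eg. injection Eg as Ex' _. congruence.
      * simpl. lia.
    + simpl. lia.
Qed.

End G.

Lemma sum_delta {K : AbsRing} {V : NormedModule K} (N : nat) (c : V) :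
  forall n, sum_n (fun n => if Nat.eqb n N then c else zero) n =
            if Nat.ltb n N then zero else c.
Proof.
  induction n as [|n IH].
  - rewrite sum_O. destruct N; reflexivity.
  - rewrite sum_Sn, IH.
    destruct (Nat.ltb_spec n N); destruct (Nat.eqb_spec (S n) N);
      destruct (Nat.ltb_spec (S n) N); try lia;
      rewrite ?plus_zero_r, ?plus_zero_l; reflexivity.
Qed.

Lemma is_series_delta {K : AbsRing} {V : NormedModule K} (N : nat) (c : V) :
  is_series (fun n => if Nat.eqb n N then c else zero) c.
Proof.
  unfold is_series. apply filterlim_ext_loc with (fun _ => c).
  - exists N. intros n Hn. symmetry. etransitivity. apply (sum_delta (K:=K) (V:=V) N c n).
    destruct (Nat.ltb_spec n N); [lia|reflexivity].
  - apply filterlim_const.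
Qed.

Theorem lemma3p1 (T : Type) (adj : T -> T -> bool) (e : nat -> option T)
  (p : T -> T -> R) (lam : C) (f : T -> T -> C) (u : T -> C) :
  enumerates e ->
  is_tree adj ->
  (forall x, ~ is_leaf adj x) ->
  nn_stochastic adj e p ->
  (* (i) *)
  (forall x y, adj x y = true -> Cmult (f x y) (f y x) <> RtoC 1) ->
  (* (ii): u x = u(x,x) = sum_{v ~ x} p(x,v) f(v,x), absolutely convergent *)
  (forall x, nbr_abs_sum adj e p x (fun v => f v x) (u x) /\ u x <> lam) ->
  (* (iii) *)
  (forall x y, adj x y = true ->
     Cmult lam (f x y) =
     Cplus (RtoC (p x y)) (Cmult (Cminus (u x) (Cmult (RtoC (p x y)) (f y x))) (f x y))) ->
  (* extension of f to all pairs along geodesics *)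
  (forall x y s, geodesic adj x s y -> f x y = walk_prod f x s) ->
  forall y : T,
    (forall x, x <> y -> nbr_abs_sum adj e p x (fun w => f w y) (Cmult lam (f x y))) /\
    nbr_abs_sum adj e p y (fun w => f w y) (u y).
Proof.
  intros Henum [Hsym [Hirr [Hconn Hnc]]] _ _ _ Hii Hiii Hext y.
  split; [|apply Hii].
  intros x Hxy.
  destruct (Hconn x y) as [s Hs].
  destruct (geo_exists _ _ _ _ _ _ eq_refl Hs) as [g Hgeo].
  destruct g as [|x' g'].
  { destruct Hgeo as [[_ Hl] _]. simpl in Hl. congruence. }
  assert (Hxx' : adj x x' = true) by (destruct Hgeo as [[[H _] _] _]; exact H).
  assert (Hgeo' := geo_tail _ _ _ _ _ _ Hgeo).
  assert (Hfxy : f x y = Cmult (f x x') (f x' y)).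
  { rewrite (Hext _ _ _ Hgeo), (Hext _ _ _ Hgeo'). reflexivity. }
  assert (Hfw : forall w, adj x w = true -> w <> x' -> f w y = Cmult (f w x) (f x y)).
  { intros w Hxw Hwx'.
    assert (Hg2 : geodesic adj w (x :: x' :: g') y).
    { destruct Hgeo as [[Hw Hl] Hmin]. split. split.
      - split; auto. rewrite Hsym; auto.
      - rewrite last_cons_gen. auto.
      - intros s' Hs'.
        destruct (geo_exists _ _ _ _ _ _ eq_refl Hs') as [h Hh].
        assert (Hhl : (length h <= length s')%nat) by (apply Hh; auto).
        assert (Hndh := geo_nodup _ _ _ _ _ Hh).
        assert (Hndg := geo_nodup _ _ _ _ _ (conj (conj Hw Hl) Hmin)).
        destruct Hh as [[Hwh Hlh] _].
        assert (Hin : In x (w :: h)).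
        { eapply sep; eauto. congruence. }
        destruct Hin as [Hin|Hin].
        { subst w. rewrite Hirr in Hxw. discriminate. }
        destruct (in_split _ _ Hin) as [h1 [h2 E]]. rewrite E in Hwh, Hlh, Hhl.
        apply walk_app in Hwh. destruct Hwh as [_ Hwh]. simpl in Hwh.
        rewrite last_app_cons in Hlh.
        assert (Hm := Hmin h2 (conj (proj2 Hwh) Hlh)).
        rewrite length_app in Hhl. simpl in Hhl, Hm |- *. lia. }
    rewrite (Hext _ _ _ Hg2). change (walk_prod f w (x :: x' :: g')) with (Cmult (f w x) (walk_prod f x (x' :: g'))). rewrite <- (Hext _ _ _ Hgeo). reflexivity. }
  destruct (Henum x') as [N [HN HNu]].
  destruct (Hii x) as [[Habs Hser] _].
  set (a := nbr_term adj e p x (fun v => f v x)) in *.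
  set (t := nbr_term adj e p x (fun w => f w y)).
  set (c := f x y).
  set (dN := Cminus (t N) (Cmult (a N) c)).
  set (d := fun n => if Nat.eqb n N then dN else (zero : C)).
  assert (Hdec : forall n, t n = Cplus (Cmult c (a n)) (d n)).
  { intros n. unfold d. destruct (Nat.eqb_spec n N) as [->|Hn].
    - unfold dN. change (zero : C) with (RtoC 0). ring.
    - unfold t, a, nbr_term. destruct (e n) as [v|] eqn:En.
      + destruct (adj x v) eqn:Hav.
        * assert (v <> x') by (intro; subst v; apply Hn; symmetry; apply HNu; auto).
          rewrite (Hfw v Hav H). fold c. change (zero : C) with (RtoC 0). ring.
        * change (zero : C) with (RtoC 0). ring.
      + change (zero : C) with (RtoC 0). ring. }
  assert (HdN : dN = Cminus (Cmult (RtoC (p x x')) (f x' y))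
                            (Cmult (Cmult (RtoC (p x x')) (f x' x)) c)).
  { unfold dN, t, a, nbr_term. rewrite HN, Hxx'. reflexivity. }
  split.
  - apply (ex_series_le (K := R_AbsRing) (V := R_CompleteNormedModule)
      _ (fun n => plus (scal (Cmod c) (Cmod (a n)))
                       (if Nat.eqb n N then Cmod dN else zero))).
    + intros n. change (norm (Cmod (t n))) with (Rabs (Cmod (t n))).
      rewrite Rabs_pos_eq by apply Cmod_ge_0.
      rewrite Hdec. eapply Rle_trans; [apply Cmod_triangle|].
      rewrite Cmod_mult. change (plus (scal (Cmod c) (Cmod (a n))) ?z) with
        (Rplus (Rmult (Cmod c) (Cmod (a n))) z).
      apply Rplus_le_compat_l. unfold d. destruct (Nat.eqb n N).
      * apply Rle_refl.
      * change (Cmod (RtoC 0) <= 0). rewrite Cmod_0. apply Rle_refl.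
    + apply (ex_series_plus (K:=R_AbsRing) (V:=R_NormedModule)). apply (ex_series_scal (K:=R_AbsRing) (V:=R_NormedModule)). exact Habs.
      exists (Cmod dN). exact (is_series_delta (K:=R_AbsRing) (V:=R_NormedModule) N (Cmod dN)).
  - assert (H := is_series_plus _ _ _ _ (is_series_scal c _ _ Hser) (is_series_delta N dN)).
    refine (is_series_ext _ _ _ _ (eq_ind _ (fun l => is_series _ l) H _ _)).
    + intros n. rewrite Hdec. reflexivity.
    + change (Cplus (Cmult c (u x)) dN = Cmult lam (f x y)).
      rewrite HdN. unfold c. rewrite Hfxy.
      replace (Cmult lam (Cmult (f x x') (f x' y))) with
        (Cmult (Cmult lam (f x x')) (f x' y)) by ring.
      rewrite (Hiii x x' Hxx'). ring.
Qed.
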